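(* Let $B$ be a graph having a path-decomposition of width $p$ and a proper $2$-coloring into stable sets $C_1, C_2$ with $|C_1| \ge |C_2|$. Then for every non-negative integer $a$ with $|C_2| - p \le a \le |C_1|$, there exist a set $X$ of at most $p$ vertices of $B$ and a proper $2$-coloring of $B\setminus X$ into stable sets $C'_1, C'_2$ with $|C'_1| = a$. *)

(* Defs.v *)
From mathcomp Require Import all_boot.
Set Implicit Arguments. Unset Strict Implicit. Unset Printing Implicit Defensive.

Definition simple_graph (T : finType) (e : rel T) : Prop :=
  symmetric e /\ irreflexive e.

Definition path_decomposition (T : finType) (e : rel T) (bags : seq {set T}) : Prop :=
  [/\ forall v : T, exists2 b, b \in bags & v \in b,
      forall u v : T, e u v -> exists2 b, b \in bags & (u \in b) && (v \in b)
    & forall (v : T) (i j k : nat), i <= j <= k -> k < size bags ->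
        v \in nth set0 bags i -> v \in nth set0 bags k -> v \in nth set0 bags j].

(* Width of a (nonempty) path-decomposition is (max bag size) - 1;
   "width p" means the maximum bag size is p+1. *)
Definition pd_width_eq (T : finType) (bags : seq {set T}) (p : nat) : Prop :=
  \max_(b <- bags) #|b| = p.+1.

Definition stable (T : finType) (e : rel T) (S : {set T}) : Prop :=
  forall u v, u \in S -> v \in S -> ~~ e u v.

Definition proper_2coloring_on (T : finType) (e : rel T) (V C1 C2 : {set T}) : Prop :=
  [/\ C1 :|: C2 = V, [disjoint C1 & C2], stable e C1 & stable e C2].

(* Main.v *)
Require Import Defs.
From mathcomp Require Import all_boot.
From mathcomp Require Import zify.

Lemma subset_of_card (T : finType) (S : {set T}) (k : nat) :
  k <= #|S| -> exists D : {set T}, D \subset S /\ #|D| = k.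
Proof.
elim: k => [|k IH] Hk; first by exists set0; rewrite sub0set cards0.
have [D [DS HD]] := IH (ltnW Hk).
have : 0 < #|S :\: D|.
  by rewrite cardsD (setIidPr DS) HD subn_gt0.
rewrite card_gt0 => /set0Pn [x]; rewrite inE => /andP [xD xS].
exists (x |: D); split; first by rewrite subUset sub1set xS DS.
by rewrite cardsU1 xD HD.
Qed.

Ltac bt := intros; repeat match goal with H : is_true true -> _ |- _ => specialize (H isT) end;
  simpl in *; try discriminate; auto.

Lemma ach (T : finType) (e : rel T) (C1 C2 L XL : {set T}) (p a : nat) :
  symmetric e -> proper_2coloring_on e setT C1 C2 -> [disjoint L & XL] ->
  (forall u w, u \in L -> w \notin L -> w \notin XL -> ~~ e u w) ->
  a <= #|C2 :&: L| + #|C1 :&: ~:(L :|: XL)| ->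
  #|C2 :&: L| + #|C1 :&: ~:(L :|: XL)| + #|XL| <= a + p ->
  exists X : {set T}, #|X| <= p /\
    exists C1' C2' : {set T}, proper_2coloring_on e (~: X) C1' C2' /\ #|C1'| = a.
Proof.
move=> esym [HU HD HS1 HS2] HLX Hno Ha Hb.
set R := ~:(L :|: XL). move: Ha Hb; rewrite -/R => Ha Hb.
set S1 := (C2 :&: L) :|: (C1 :&: R).
set S2 := (C1 :&: L) :|: (C2 :&: R).
have cov x : (x \in C1) || (x \in C2) by rewrite -in_setU HU inE.
have dis x : ~~ ((x \in C1) && (x \in C2)).
  by apply/negP => /andP [h1 h2]; rewrite (disjointFr HD h1) in h2.
have disLX x : ~~ ((x \in L) && (x \in XL)).
  by apply/negP => /andP [h1 h2]; rewrite (disjointFr HLX h1) in h2.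
have cS1 : #|S1| = #|C2 :&: L| + #|C1 :&: R|.
  rewrite cardsU; suff -> : C2 :&: L :&: (C1 :&: R) = set0 by rewrite cards0 subn0.
  apply/setP => x; rewrite !inE; move: (dis x); rewrite /R ?inE.
  by case: (x \in C1); case: (x \in C2); case: (x \in L).
have [D [DS cD]] := @subset_of_card _ S1 (#|C2 :&: L| + #|C1 :&: R| - a) ltac:(rewrite cS1; lia).
exists (XL :|: D); split.
  apply: (leq_trans (leq_card_setU _ _)); rewrite cD; lia.
exists (S1 :\: D), S2; split; last first.
  by rewrite cardsD (setIidPr DS) cD cS1; lia.
have DS' x : x \in D -> x \in S1 by move=> h; apply: (subsetP DS).
have nE u w : u \in L -> w \in R -> ~~ e u w.
  move=> uL; rewrite /R ?inE negb_or => /andP [wL wX]; exact: Hno.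
split.
- apply/setP => x; rewrite !inE; move: (cov x) (dis x) (disLX x) (DS' x).
  rewrite /S1 /R ?inE.
  case: (x \in C1); case: (x \in C2); case: (x \in L); case: (x \in XL);
     case: (x \in D); bt.
- rewrite disjoint_subset; apply/subsetP => x; rewrite /S1 /S2 /R !inE; move: (dis x).
  by case: (x \in C1); case: (x \in C2); case: (x \in L); case: (x \in XL);
     case: (x \in D); bt.
- move=> u v; rewrite !in_setD => /andP [_ hu] /andP [_ hv].
  move: hu hv; rewrite /S1 !in_setU !in_setI => /orP [/andP [u2 uL]|/andP [u1 uR]]
    /orP [/andP [v2 vL]|/andP [v1 vR]].
  + exact: HS2.
  + exact: nE.
  + by rewrite esym; exact: nE.
  + exact: HS1.
- move=> u v; rewrite /S2 !in_setU !in_setI => /orP [/andP [u2 uL]|/andP [u1 uR]]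
    /orP [/andP [v2 vL]|/andP [v1 vR]].
  + exact: HS1.
  + exact: nE.
  + by rewrite esym; exact: nE.
  + exact: HS2.
Qed.
Theorem lemma1 (T : finType) (e : rel T) (bags : seq {set T}) (p : nat)
    (C1 C2 : {set T}) :
  simple_graph e ->
  path_decomposition e bags -> pd_width_eq bags p ->
  proper_2coloring_on e setT C1 C2 ->
  #|C2| <= #|C1| ->
  forall a : nat, #|C2| <= a + p -> a <= #|C1| ->
  exists X : {set T}, #|X| <= p /\
    exists C1' C2' : {set T}, proper_2coloring_on e (~: X) C1' C2' /\ #|C1'| = a.
Proof.
move=> [esym eirr] [Hcov Hedge Hcons] Hw Hcol _ a0 Ha01 Ha02.
set n := size bags.
pose l (v : T) : nat := \max_(i < n | v \in nth set0 bags i) i.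
have Hl2 v (i : 'I_n) : v \in nth set0 bags i -> i <= l v.
  by move=> h; apply: (@leq_bigmax_cond _ (fun i : 'I_n => v \in nth set0 bags i) (fun i : 'I_n => nat_of_ord i)).
have Hl1 v : l v < n /\ v \in nth set0 bags (l v).
  have [b bin vb] := Hcov v.
  have hi : index b bags < n by rewrite index_mem.
  have : 0 < #|[pred i : 'I_n | v \in nth set0 bags i]|.
    apply/card_gt0P; exists (Ordinal hi); by rewrite inE /= nth_index.
  move=> /(@eq_bigmax_cond _ _ (fun i : 'I_n => nat_of_ord i)) [i0 Hi0 Hm].
  have -> : l v = i0 by rewrite /l -Hm.
  by split; [apply: ltn_ord | exact: Hi0].
have Hbag i : i < n -> #|nth set0 bags i| <= p.+1.
  move=> hi; rewrite -Hw.
  by apply: (@leq_bigmax_seq _ bags predT (fun b : {set T} => #|b|)); [apply: mem_nth|].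
have Kedge u w m : e w u -> l w <= m <= l u -> u \in nth set0 bags m.
  move=> ewu /andP [h1 h2].
  have [b bin /andP [wb ub]] := Hedge w u ewu.
  have hi : index b bags < n by rewrite index_mem.
  have hj : index b bags <= l w by apply: (Hl2 w (Ordinal hi)); rewrite /= nth_index.
  have [hu1 hu2] := Hl1 u.
  apply: (Hcons u (index b bags) m (l u)) => //.
    by rewrite h2 andbT; apply: leq_trans h1.
  by rewrite nth_index.
pose X (L : {set T}) := [set u | (u \notin L) && [exists w, (w \in L) && e w u]].
pose f (L : {set T}) := #|C2 :&: L| + #|C1 :&: ~:(L :|: X L)|.
pose prefix (L : {set T}) := forall u w, u \in L -> w \notin L -> l u <= l w.
have Ach L a : a <= f L -> f L + #|X L| <= a + p ->
  exists X : {set T}, #|X| <= p /\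
    exists C1' C2' : {set T}, proper_2coloring_on e (~: X) C1' C2' /\ #|C1'| = a.
  move=> h1 h2; apply: (@ach T e C1 C2 L (X L) p a esym Hcol) => //.
    rewrite disjoint_subset; apply/subsetP => x; rewrite !inE.
    by case: (x \in L).
  move=> u w uL wL wX; apply/negP => euw; move: wX; rewrite inE wL /=.
  by move/negP; apply; apply/existsP; exists u; rewrite uL.
have Main m : forall L : {set T}, #|L| = m -> prefix L -> forall a, f L + #|X L| <= a + p ->
    a <= #|C1| ->
    exists X : {set T}, #|X| <= p /\
    exists C1' C2' : {set T}, proper_2coloring_on e (~: X) C1' C2' /\ #|C1'| = a.
  elim: m => [|m IH] L cL pL a h1 h2.
    move/cards0_eq: cL => L0; subst L.
    have X0 : X set0 = set0.
      by apply/setP => x; rewrite !inE /=; case: existsP => // -[w]; rewrite inE.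
    have fL : f set0 = #|C1| by rewrite /f X0 setU0 setC0 setIT setI0 cards0.
    by apply: (Ach set0 a) => //; rewrite fL.
  have : 0 < #|L| by rewrite cL.
  move=> /(@eq_bigmax_cond _ _ l) [v vL Hm].
  have lmax u : u \in L -> l u <= l v.
    by move=> uL; rewrite -Hm; apply: (@leq_bigmax_cond _ (fun x => x \in L) l).
  set B := nth set0 bags (l v).
  have [lvn vB] := Hl1 v.
  have cB : #|B| <= p.+1 by apply: Hbag.
  have key u w : w \in L -> u \notin L -> e w u -> u \in B.
    move=> wL uL ewu; apply: (Kedge u w) => //.
    by rewrite lmax //= pL.
  have XLB : X L \subset B.
    apply/subsetP => u; rewrite inE => /andP [uL /existsP [w /andP [wL ewu]]].
    exact: (key u w).
  set L' := L :\ v.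
  have XL'B : X L' \subset B.
    apply/subsetP => u; rewrite inE => /andP [uL' /existsP [w /andP [wL' ewu]]].
    have [->|uv] := eqVneq u v; first exact: vB.
    move: uL' wL'; rewrite !inE uv /= => uL /andP [_ wL].
    exact: (key u w).
  have cL' : #|L'| = m by move: cL; rewrite (cardsD1 v L) vL add1n => -[].
  have pL' : prefix L'.
    move=> u w; rewrite !inE => /andP [_ uL]; rewrite negb_and negbK.
    case/orP => [/eqP -> | wL]; first exact: lmax.
    exact: pL.
  have [ha|ha] := leqP a (f L); first by apply: (Ach L a).
  apply: (IH L' cL' pL' a) => //.
  have s1 : #|C2 :&: L'| <= #|C2 :&: L|.
    by apply: subset_leq_card; apply: setIS; apply: subsetDl.
  have s2 : C1 :&: ~: (L' :|: X L') \subset (C1 :&: ~: (L :|: X L)) :|: (B :\: X L').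
    apply/subsetP => x; rewrite !(in_setI, in_setU, in_setC, in_setD) negb_or.
    move=> /andP [x1 /andP [xL' xX']]; rewrite x1 xX' /=.
    case xL: (x \in L); last first.
      case xX: (x \in X L) => //=; by rewrite (subsetP XLB).
    move: xL'; rewrite in_set1 xL andbT negbK => /eqP ->.
    by rewrite vB orbT.
  have s3 := subset_leq_card s2.
  have s4 := (leq_card_setU (C1 :&: ~: (L :|: X L)) (B :\: X L')).1.
  have s5 : #|B :\: X L'| = #|B| - #|X L'| by rewrite cardsD (setIidPr XL'B).
  have s6 : #|X L'| <= #|B| by apply: subset_leq_card.
  rewrite /f in ha *; lia.
have pT : prefix setT by move=> u w _; rewrite inE.
have XT : X setT = set0 by apply/setP => x; rewrite !inE.
have fT : f setT = #|C2| by rewrite /f XT setU0 setCT setI0 cards0 setIT addn0.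
apply: (Main _ setT erefl pT a0) => //.
by rewrite fT XT cards0 addn0.
Qed.
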